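(* Let $G$ be a group acting on a set $X$ on the left, and let $\mathfrak{F}$ be any family of subsets of $X$. Then the filter $\mathfrak{R}_{\mathfrak{F}}$ on $G$ is left topological.
   Context: For $A\in\mathfrak{F}$ let $\Delta_{\mathfrak{F}}(A)=\{g\in G: gB\subseteq A$ for some $B\in\mathfrak{F}$ with $B\subseteq A\}$ (note $e\in\Delta_{\mathfrak{F}}(A)$). $\mathfrak{R}_{\mathfrak{F}}$ is the filter on $G$ with base consisting of the sets $\bigcap_{A\in\mathfrak{F}'}\Delta_{\mathfrak{F}}(A)$, $\mathfrak{F}'$ a finite subfamily of $\mathfrak{F}$. A filter $\varphi$ on $G$ is left topological if there is a topology on $G$ in which every left shift $x\mapsto gx$ is continuous and for which $\varphi$ is the filter of neighbourhoods of the identity $e$ (i.e. $\varphi$ is a base at $e$). *)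

(* Defs.v *)
From Stdlib Require Import List.
Import ListNotations.

Definition is_group {G : Type} (mul : G -> G -> G) (inv : G -> G) (e : G) : Prop :=
  (forall a b c, mul a (mul b c) = mul (mul a b) c) /\
  (forall a, mul e a = a) /\ (forall a, mul a e = a) /\
  (forall a, mul (inv a) a = e) /\ (forall a, mul a (inv a) = e).

Definition is_left_action {G X : Type} (mul : G -> G -> G) (e : G)
  (act : G -> X -> X) : Prop :=
  (forall x, act e x = x) /\ (forall g h x, act (mul g h) x = act g (act h x)).

Definition Delta {G X : Type} (act : G -> X -> X) (F : (X -> Prop) -> Prop)
  (A : X -> Prop) : G -> Prop :=
  fun g => exists B, F B /\ (forall x, B x -> A x) /\ (forall x, B x -> A (act g x)).

(* The filter R_F on G generated by the base of finite intersections
   of the Delta_F(A), A ∈ F (the empty intersection being G). *)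
Definition R_filter {G X : Type} (act : G -> X -> X) (F : (X -> Prop) -> Prop)
  : (G -> Prop) -> Prop :=
  fun U => exists l : list (X -> Prop), Forall F l /\
     (forall g, (forall A, In A l -> Delta act F A g) -> U g).

Definition is_topology {T : Type} (O : (T -> Prop) -> Prop) : Prop :=
  O (fun _ => True) /\
  (forall U V, O U -> O V -> O (fun x => U x /\ V x)) /\
  (forall (I : Type) (U : I -> T -> Prop), (forall i, O (U i)) ->
       O (fun x => exists i, U i x)).

Definition continuous_for {T : Type} (O : (T -> Prop) -> Prop) (f : T -> T) : Prop :=
  forall U, O U -> O (fun x => U (f x)).

Definition nbhd {T : Type} (O : (T -> Prop) -> Prop) (p : T) (N : T -> Prop) : Prop :=
  exists U, O U /\ U p /\ (forall x, U x -> N x).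

Definition left_topological {G : Type} (mul : G -> G -> G) (e : G)
  (phi : (G -> Prop) -> Prop) : Prop :=
  exists O, is_topology O /\ (forall g, continuous_for O (mul g)) /\
    (forall N, phi N <-> nbhd O e N).

(* Main.v *)
Require Import Defs.
From Stdlib Require Import List.
Import ListNotations.

Section S.
Variables (G X : Type) (mul : G -> G -> G) (e : G) (act : G -> X -> X)
  (F : (X -> Prop) -> Prop).
Hypothesis Hact : is_left_action mul e act.

Lemma R_mono (U V : G -> Prop) : R_filter act F U -> (forall g, U g -> V g) ->
  R_filter act F V.
Proof. intros [l [Hl HU]] H. exists l. split; auto. Qed.

Lemma R_top : R_filter act F (fun _ => True).
Proof. exists []. split; auto. Qed.

Lemma R_and (U V : G -> Prop) : R_filter act F U -> R_filter act F V ->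
  R_filter act F (fun g => U g /\ V g).
Proof.
  intros [l [Hl HU]] [m [Hm HV]]. exists (l ++ m). split.
  - apply Forall_app; auto.
  - intros g Hg; split; [apply HU | apply HV]; intros A HA; apply Hg;
    apply in_or_app; auto.
Qed.

Lemma R_e (U : G -> Prop) : R_filter act F U -> U e.
Proof.
  destruct Hact as [He _].
  intros [l [Hl HU]]. apply HU. intros A HA.
  rewrite Forall_forall in Hl. exists A. split; auto. split; auto.
  intros x Hx; rewrite He; auto.
Qed.

Lemma aux (y : G) : forall l, Forall F l -> (forall A, In A l -> Delta act F A y) ->
  exists l', Forall F l' /\ forall z, (forall A', In A' l' -> Delta act F A' z) ->
    forall A, In A l -> Delta act F A (mul y z).
Proof.
  destruct Hact as [_ Hm].
  induction l as [|A l IH]; intros Hl Hy.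
  - exists []. split; auto. intros z _ A [].
  - inversion Hl; subst.
    destruct IH as [l' [Hl' Hz]]; auto.
    { intros A' HA'; apply Hy; right; auto. }
    destruct (Hy A (or_introl eq_refl)) as [B [FB [BA yBA]]].
    exists (B :: l'). split; [constructor; auto|].
    intros z Hz' A0 [<-|HA0].
    + destruct (Hz' B (or_introl eq_refl)) as [C [FC [CB zCB]]].
      exists C. split; auto. split; auto.
      intros x Hx. rewrite Hm. apply yBA. auto.
    + apply Hz; auto. intros A' HA'; apply Hz'; right; auto.
Qed.

Lemma R_P (U : G -> Prop) : R_filter act F U ->
  R_filter act F (fun y => R_filter act F (fun z => U (mul y z))).
Proof.
  intros [l [Hl HU]]. exists l. split; auto.
  intros y Hy. destruct (aux y l Hl Hy) as [l' [Hl' Hz]].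
  exists l'. split; auto.
Qed.
End S.

Theorem proposition5p5 (G X : Type) (mul : G -> G -> G) (inv : G -> G) (e : G)
  (act : G -> X -> X) (F : (X -> Prop) -> Prop) :
  is_group mul inv e -> is_left_action mul e act ->
  left_topological mul e (R_filter act F).
Proof.
  intros [Hass [Hel [Her _]]] Hact.
  exists (fun U => forall x, U x -> R_filter act F (fun z => U (mul x z))).
  split; [split; [|split]|split].
  - intros x _. apply R_top.
  - intros U V HU HV x [Ux Vx]. apply R_and; auto.
  - intros I U HU x [i Hi]. eapply R_mono; [apply (HU i x Hi)|].
    intros g Hg; exists i; auto.
  - intros g U HU x Hx. eapply R_mono; [apply (HU _ Hx)|].
    intros z Hz. rewrite Hass. auto.
  - intros N; split.
    + intros HN. exists (fun x => R_filter act F (fun z => N (mul x z))).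
      split; [|split].
      * intros x Hx. eapply R_mono; [apply (R_P _ _ mul e act F Hact _ Hx)|].
        intros y Hy. eapply R_mono; [apply Hy|]. intros z Hz. rewrite <- Hass. auto.
      * eapply R_mono; [apply HN|]. intros z Hz; rewrite Hel; auto.
      * intros x Hx. apply (R_e _ _ _ _ _ _ Hact) in Hx. rewrite Her in Hx. auto.
    + intros [U [HU [Ue UN]]]. eapply R_mono; [apply (HU e Ue)|].
      intros z Hz. simpl in Hz. rewrite Hel in Hz. auto.
Qed.
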